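(* Let $D$ be a set, let $m \ge 1$, $e \ge k \ge 1$ be integers, and let $\Sigma = \mathbb{Z}_{2^{32}}^{2m}$. Let $J : D \to \Sigma^{e}$ be a map (an erasure code) with minimum distance $k$, i.e. for all $x \neq y$ in $D$, the sequences $J(x)$ and $J(y)$ differ in at least $k$ of their $e$ coordinates. For a key $s \in \mathbb{Z}_{2^{32}}^{2m}$ and $d \in \Sigma$ define $$\mathrm{NH}(s,d) = \sum_{i=0}^{m-1} (d_{2i} + s_{2i})(d_{2i+1} + s_{2i+1}) \in \mathbb{Z}_{2^{64}},$$ where each addition $d_j + s_j$ is computed in $\mathbb{Z}_{2^{32}}$ and the result is regarded as an integer in $[0,2^{32})$, while the products and the outer sum are computed in $\mathbb{Z}_{2^{64}}$. Let $T$ be a $k \times e$ matrix with integer entries, acting on $\mathbb{Z}_{2^{64}}^{e}$ by matrix multiplication over $\mathbb{Z}_{2^{64}}$. Assume that for every set $F$ of $k$ distinct column indices, the $k\times k$ submatrix $T|_F$ consisting of the columns of $T$ indexed by $F$ has integer determinant not divisible by $2^{64}$, and let $p$ be the largest integer such that $2^{p}$ divides $\det(T|_F)$ for some such $F$ (i.e. $p = \max_F \nu_2(\det T|_F)$). For keys $s = (s_1,\dots,s_e)$ with each $s_i \in \mathbb{Z}_{2^{32}}^{2m}$, define the EHC hash $$E(s,x) = T \cdot \big(\mathrm{NH}(s_1, J(x)_1), \dots, \mathrm{NH}(s_e, J(x)_e)\big)^{\top} \in \mathbb{Z}_{2^{64}}^{k}.$$ Then for all $x \neq y$ in $D$ and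 all $\delta \in \mathbb{Z}_{2^{64}}^{k}$, $$\Pr_s\big[E(s,x) - E(s,y) = \delta\big] \le 2^{k(p-32)},$$ where $s_1,\dots,s_e$ are chosen independently and uniformly at random from $\mathbb{Z}_{2^{32}}^{2m}$. That is, $E$ is $2^{k(p-32)}$-almost $\Delta$-universal.
   Context: A hash family $H$ (a map from seeds $S$ and domain $D$ to a codomain that is an abelian group) is $\varepsilon$-almost $\Delta$-universal if for all $x \neq y$ in $D$ and every $\delta$ in the codomain, $\Pr_{s \in S}[H(s,x) - H(s,y) = \delta] \le \varepsilon$, with $s$ uniform. $\nu_2(n)$ denotes the exponent of the largest power of $2$ dividing the nonzero integer $n$. This is the ''generalized Encode, Hash, Combine'' construction: encode with an erasure code of minimum distance $k$, hash each encoded coordinate with NH under independent keys, and combine with a fixed integer matrix over $\mathbb{Z}_{2^{64}}$. *)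

(* Defs.v *)
From HB Require Import structures.
From mathcomp Require Import all_boot all_order all_algebra.
From mathcomp Require Import zify.
Set Implicit Arguments. Unset Strict Implicit. Unset Printing Implicit Defensive.
Import GRing.Theory Num.Theory.
Local Open Scope ring_scope.

Notation Z32 := 'Z_(2 ^ 32).
Notation Z64 := 'Z_(2 ^ 64).

Notation Sigma m := 'rV[Z32]_(2 * m).

Lemma ev_lt (m : nat) (i : 'I_m) : (2 * i < 2 * m)%N.
Proof. by rewrite ltn_pmul2l. Qed.
Lemma od_lt (m : nat) (i : 'I_m) : (2 * i + 1 < 2 * m)%N.
Proof. have := ltn_ord i; lia. Qed.

Definition evi (m : nat) (i : 'I_m) : 'I_(2 * m) := Ordinal (ev_lt i).
Definition odi (m : nat) (i : 'I_m) : 'I_(2 * m) := Ordinal (od_lt i).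

Definition NH (m : nat) (s d : Sigma m) : Z64 :=
  \sum_(i < m)
    ((nat_of_ord (d 0 (evi i) + s 0 (evi i)))%:R *
     (nat_of_ord (d 0 (odi i) + s 0 (odi i)))%:R).

Definition hamming (A : eqType) (e : nat) (u v : 'I_e -> A) : nat :=
  #|[set i : 'I_e | u i != v i]|.

Definition EHC (D : Type) (m k e : nat) (J : D -> 'I_e -> Sigma m)
  (T : 'M[int]_(k, e)) (s : {ffun 'I_e -> Sigma m}) (x : D) : 'cV[Z64]_k :=
  map_mx (fun z : int => z%:~R) T *m \col_(i < e) NH (s i) (J x i).

Definition diff_prob (D : Type) (m k e : nat) (J : D -> 'I_e -> Sigma m)
  (T : 'M[int]_(k, e)) (x y : D) (delta : 'cV[Z64]_k) : rat :=
  (#|[set s : {ffun 'I_e -> Sigma m} | EHC J T s x - EHC J T s y == delta]|%:R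
   / #|{: {ffun 'I_e -> Sigma m}}|%:R).

(* Main.v *)
From Stdlib Require Import ZArith Lia.
Require Import Defs.
From HB Require Import structures.
From mathcomp Require Import all_boot all_order all_algebra zify ring.
Set Implicit Arguments. Unset Strict Implicit. Unset Printing Implicit Defensive.
Import GRing.Theory Num.Theory.
Section ZpH. Local Open Scope ring_scope.

Lemma Zp_valD n (h : (1 < n)%N) (x y : 'Z_n) : val (x + y) = ((val x + val y) %% n)%N.
Proof. by rewrite -[x in LHS]natr_Zp -[y in LHS]natr_Zp -natrD; apply: val_Zp_nat. Qed.

Lemma Zp_natE n (h : (1 < n)%N) a b : ((a%:R : 'Z_n) = b%:R) <-> (a = b %[mod n])%N.
Proof. have V c : val (c%:R : 'Z_n) = (c %% n)%N by apply: val_Zp_nat.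
split => [E|E]; first by have := congr1 val E; rewrite !V.
by apply: val_inj; rewrite !V. Qed.

Lemma card_Zn n (h : (1 < n)%N) : #|{: 'Z_n}| = n.
Proof. by rewrite card_ord Zp_cast. Qed.

Lemma Zp_vallt n (h : (1 < n)%N) (x : 'Z_n) : (val x < n)%N.
Proof. have := ltn_ord x; by rewrite [X in (_ < X)%N -> _]Zp_cast. Qed.
End ZpH.

Lemma card_fib_le (A B : finType) (P : pred A) (Q : pred B) (g : A -> B) c :
  (forall a, P a -> Q (g a)) ->
  (forall b, #|[pred a | P a && (g a == b)]| <= c) -> #|P| <= #|Q| * c.
Proof.
move=> PQ Hc.
rewrite -sum1_card (partition_big g Q) //= -sum_nat_const.
apply: leq_sum => b Qb; rewrite sum1_card; exact: Hc.
Qed.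

Lemma card_dbl (A B : finType) (P : pred A) (g : A -> B) N c :
  (forall a, #|[pred a' | g a' == g a]| = N) ->
  (forall a, #|[pred a' | P a' && (g a' == g a)]| <= c) ->
  #|P| * N <= c * #|A|.
Proof.
move=> HN Hc.
have E1 : #|P| * N = \sum_(a | P a) \sum_(a' | g a' == g a) 1.
  rewrite -sum1_card big_distrl /=; apply: eq_bigr => a _.
  by rewrite mul1n -(HN a) sum1_card.
rewrite E1 (exchange_big_dep predT) //=.
rewrite mulnC -sum_nat_const; apply: leq_sum => a' _.
rewrite (eq_bigl [pred a | P a && (g a' == g a)]) //.
rewrite sum1_card (eq_card (B := [pred a | P a && (g a == g a')])) ?Hc //.
by move=> a; rewrite !inE eq_sym.
Qed.

Section CZ. Local Open Scope Z_scope.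
Lemma core_Z (W a a' D q k : Z) :
  (0 < W) -> (0 <= a < W) -> (0 <= a' < W) -> a <> a' -> (0 < D < W) ->
  (k = 0 \/ k = 1) ->
  ((a' - a) * D - k * a' * W = q * (W * W)) -> False.
Proof.
move=> W0 Ha Ha' Hne HD Hk E.
have Hq : (q = 0).
  destruct Hk as [-> | ->].
  - destruct (Z.lt_trichotomy a a') as [h|[h|h]]; [|lia|]; nia.
  - destruct (Z.lt_trichotomy a a') as [h|[h|h]]; [|lia|]; nia.
subst q. destruct Hk as [-> | ->].
- destruct (Z.lt_trichotomy a a') as [h|[h|h]]; [|lia|]; nia.
- destruct (Z.lt_trichotomy a a') as [h|[h|h]]; [|lia|]; nia.
Qed.
End CZ.

Lemma modW_cases W b r : (0 < W)%N -> (b < W)%N -> (r < W)%N ->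
  exists2 eta, (eta = 0 \/ eta = 1)%N & ((b + r) %% W + W * eta = b + r)%N /\ (eta = 1 -> W <= b + r)%N.
Proof.
move=> W0 hb hr; case: (ltnP (b + r) W) => h.
  by exists 0%N; [left | rewrite modn_small //; split=> //; lia].
exists 1%N; [by right|]; split=> // .
have -> : (b + r = (b + r - W) + W)%N by lia.
rewrite modnDr modn_small; lia.
Qed.

Lemma core_nat W a a' b1 b2 r : (0 < W)%N -> (a < W)%N -> (a' < W)%N -> a <> a' ->
  (b1 < b2)%N -> (b2 < W)%N -> (r < W)%N ->
  ((a*b1 + a'*((b2+r)%%W)) = (a*b2 + a'*((b1+r)%%W)) %[mod W*W])%N -> False.
Proof.
move=> W0 ha ha' hne h12 h2 hr E.
have [e1 He1 [E1 F1]] := modW_cases W0 (ltn_trans h12 h2) hr.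
have [e2 He2 [E2 F2]] := modW_cases W0 h2 hr.
move: E1 E2 E.
set M1 := ((b1 + r) %% W)%N; set M2 := ((b2 + r) %% W)%N => E1 E2 E.
set x := (a * b1 + a' * M2)%N in E.
set y := (a * b2 + a' * M1)%N in E.
have Dx := divn_eq x (W * W); have Dy := divn_eq y (W * W).
set qx := (x %/ (W * W))%N in Dx; set qy := (y %/ (W * W))%N in Dy.
rewrite E in Dx.
have hM1 : Z.of_nat M1 = Z.sub (Z.add (Z.of_nat b1) (Z.of_nat r)) (Z.mul (Z.of_nat W) (Z.of_nat e1)) by clear -E1; lia.
have hM2 : Z.of_nat M2 = Z.sub (Z.add (Z.of_nat b2) (Z.of_nat r)) (Z.mul (Z.of_nat W) (Z.of_nat e2)) by clear -E2; lia.
have EX : Z.of_nat x = Z.add (Z.mul (Z.of_nat a) (Z.of_nat b1)) (Z.mul (Z.of_nat a') (Z.of_nat M2)) by rewrite /x Nat2Z.inj_add !Nat2Z.inj_mul.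
have EY : Z.of_nat y = Z.add (Z.mul (Z.of_nat a) (Z.of_nat b2)) (Z.mul (Z.of_nat a') (Z.of_nat M1)) by rewrite /y Nat2Z.inj_add !Nat2Z.inj_mul.
have hq : Z.sub (Z.of_nat x) (Z.of_nat y) = Z.mul (Z.sub (Z.of_nat qx) (Z.of_nat qy)) (Z.mul (Z.of_nat W) (Z.of_nat W)).
  move: Dx Dy; generalize (y %% (W * W))%N => r0 Dx Dy; rewrite Dx Dy !Nat2Z.inj_add !Nat2Z.inj_mul; ring.
have Hk : (Z.sub (Z.of_nat e2) (Z.of_nat e1) = Z0 \/ Z.sub (Z.of_nat e2) (Z.of_nat e1) = Zpos xH).
  have hM2lt : (M2 < W)%N by apply: ltn_pmod.
  clear -He1 He2 F1 E2 h12 hM2lt; lia.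
apply: (@core_Z (Z.of_nat W) (Z.of_nat a) (Z.of_nat a') (Z.sub (Z.of_nat b2) (Z.of_nat b1))
   (Z.sub (Z.of_nat qx) (Z.of_nat qy)) (Z.sub (Z.of_nat e2) (Z.of_nat e1))) => //; try (clear -W0 ha ha' hne h12 h2; lia).
rewrite -hq EX EY hM1 hM2; ring.
Qed.
Section Pair. Local Open Scope ring_scope.

Definition pt W N (d0 d1 d0' d1' a b : 'Z_W) : 'Z_N :=
  (val (d0 + a))%:R * (val (d1 + b))%:R - (val (d0' + a))%:R * (val (d1' + b))%:R.

Lemma pt_fix W N (hW : (1 < W)%N) (hN : N = (W * W)%N) (d0 d1 d0' d1' a b1 b2 : 'Z_W) :
  d0 != d0' -> pt N d0 d1 d0' d1' a b1 = pt N d0 d1 d0' d1' a b2 -> b1 = b2.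
Proof.
move=> hne E.
have hN1 : (1 < N)%N by rewrite hN (leq_trans hW) // leq_pmulr // ltnW.
have hAA : val (d0 + a) <> val (d0' + a).
  by move/val_inj/addIr => h; move: hne; rewrite h eqxx.
have Hb (i : 'Z_W) : val (d1' + i) = modn (addn (val (d1 + i)) (val (d1' - d1))) W.
  by rewrite -Zp_valD //; congr val; timeout 10 ring.
suff : val (d1 + b1) = val (d1 + b2) by move/val_inj/addrI.
apply/eqP; apply: contraT => hne2; exfalso.
move: E; rewrite /pt (Hb b1) (Hb b2).
set A := val (d0 + a); set A' := val (d0' + a).
set B1 := val (d1 + b1); set B2 := val (d1 + b2); set r := val (d1' - d1).
move=> E.
have E2 : ((A * B1 + A' * ((B2 + r) %% W))%N%:R : 'Z_N) = (A * B2 + A' * ((B1 + r) %% W))%N%:R.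
  apply/eqP; rewrite -subr_eq0 !natrD !natrM.
  set x := (A%:R * B1%:R) : 'Z_N in E *; set y := (A'%:R * ((B1 + r) %% W)%:R) : 'Z_N in E *.
  set z := (A%:R * B2%:R) : 'Z_N in E *; set w := (A'%:R * ((B2 + r) %% W)%:R) : 'Z_N in E *.
  have -> : x + w - (z + y) = (x - y) - (z - w) by ring.
  by rewrite E subrr.
move/(Zp_natE hN1): E2; rewrite hN => E2.
have W0 : (0 < W)%N by apply: ltn_trans hW.
have hA := Zp_vallt hW (d0 + a); have hA' := Zp_vallt hW (d0' + a).
have hB1 := Zp_vallt hW (d1 + b1); have hB2 := Zp_vallt hW (d1 + b2).
have hr := Zp_vallt hW (d1' - d1).
case: (ltngtP B1 B2) => h.
- exact: (core_nat W0 hA hA' hAA h hB2 hr E2).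
- exact: (core_nat W0 hA hA' hAA h hB1 hr (esym E2)).
- by move: hne2; rewrite -/B1 -/B2 h eqxx.
Qed.

Lemma pt_swap W N (d0 d1 d0' d1' a b : 'Z_W) :
  pt N d0 d1 d0' d1' a b = pt N d1 d0 d1' d0' b a.
Proof. by rewrite /pt mulrC [X in _ - X]mulrC. Qed.

Lemma pair_count W N (hW : (1 < W)%N) (hN : N = (W * W)%N) (d0 d1 d0' d1' : 'Z_W) (c : 'Z_N) :
  (d0 != d0') || (d1 != d1') ->
  (#|[pred ab : 'Z_W * 'Z_W | pt N d0 d1 d0' d1' ab.1 ab.2 == c]| <= W)%N.
Proof.
have cW : #|(predT : pred 'Z_W)| = W.
  by rewrite -[RHS](card_Zn hW); apply: eq_card => x.
case/orP => hne.
  apply: (@leq_trans (#|(predT : pred 'Z_W)| * 1)); last by rewrite cW muln1.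
  apply: (card_fib_le (g := fst)) => // a0; apply/card_le1_eqP.
  move=> [a b1] [a' b2]; rewrite !inE => /andP[/eqP E1 /eqP ea] /andP[/eqP E2 /eqP ea'].
  rewrite /= in E1 E2 ea ea'; subst a a'; congr pair.
  exact: (pt_fix hW hN hne (etrans E2 (esym E1))).
apply: (@leq_trans (#|(predT : pred 'Z_W)| * 1)); last by rewrite cW muln1.
apply: (card_fib_le (g := snd)) => // b0; apply/card_le1_eqP.
move=> [a1 b] [a2 b']; rewrite !inE => /andP[/eqP E1 /eqP eb] /andP[/eqP E2 /eqP eb'].
rewrite /= in E1 E2 eb eb'; subst b b'; congr pair.
rewrite pt_swap in E1; rewrite pt_swap in E2.
exact: (pt_fix hW hN hne (etrans E2 (esym E1))).
Qed.
End Pair.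
Section NHs. Local Open Scope ring_scope.

Lemma Sigma_neq m (d d' : Sigma m) : d != d' ->
  exists j : 'I_m, (d 0 (evi j) != d' 0 (evi j)) || (d 0 (odi j) != d' 0 (odi j)).
Proof.
move=> hne; case: (boolP [exists j : 'I_m, (d 0 (evi j) != d' 0 (evi j)) || (d 0 (odi j) != d' 0 (odi j))]).
  by move/existsP.
move/existsPn => H; exfalso; apply: (negP hne); apply/eqP/matrixP => i k.
rewrite [i]ord1.
have hk : (k %/ 2 < m)%N by have := ltn_ord k; lia.
have := H (Ordinal hk); rewrite negb_or !negbK => /andP[/eqP e1 /eqP e2].
have [->|->] : k = evi (Ordinal hk) \/ k = odi (Ordinal hk).
  case: (boolP (odd k)) => ho; [right|left]; apply: val_inj => /=; move: ho; lia.
- exact: e1.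
- exact: e2.
Qed.

Definition Tm m (s d : Sigma m) (i : 'I_m) : Z64 :=
  (nat_of_ord (d 0 (evi i) + s 0 (evi i)))%:R *
  (nat_of_ord (d 0 (odi i) + s 0 (odi i)))%:R.

Definition restS m (j : 'I_m) (d d' s : Sigma m) : Z64 :=
  \sum_(i < m | i != j) (Tm s d i - Tm s d' i).

Lemma NH_split m (j : 'I_m) (s d d' : Sigma m) :
  NH s d - NH s d' = pt (2 ^ 64) (d 0 (evi j)) (d 0 (odi j)) (d' 0 (evi j)) (d' 0 (odi j))
      (s 0 (evi j)) (s 0 (odi j)) + restS j d d' s.
Proof. by rewrite /NH -sumrB (bigD1 j). Qed.


Lemma h32 : (1 < 2 ^ 32)%N.
Proof. by rewrite -[X in (X < _)%N]/(2 ^ 0)%N ltn_exp2l. Qed.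
Lemma h64 : (2 ^ 64 = 2 ^ 32 * 2 ^ 32)%N.
Proof. by rewrite -expnD. Qed.

Lemma evod_neq m (i j : 'I_m) : evi i != odi j.
Proof. apply/eqP => /(congr1 val) /=; lia. Qed.

Lemma NH_count m (d d' : Sigma m) (w : Z64) : d != d' ->
  (#|[pred s : Sigma m | (NH s d - NH s d')%R == w]| * 2 ^ 32 <= #|{: Sigma m}|)%N.
Proof.
move=> hne; have [j hj] := Sigma_neq hne.
set W := (2 ^ 32)%N.
pose g (s : Sigma m) : Sigma m := \row_i (if (i == evi j) || (i == odi j) then 0 else s 0 i).
pose h (s : Sigma m) (ab : Z32 * Z32) : Sigma m :=
  \row_i (if i == evi j then ab.1 else if i == odi j then ab.2 else s 0 i).
have hevod : (odi j == evi j) = false by apply/negbTE; rewrite eq_sym evod_neq.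
have key s s' : g s' == g s -> s' = h s (s' 0 (evi j), s' 0 (odi j)).
  move/eqP/matrixP => E; apply/matrixP => i k; rewrite [i]ord1 mxE.
  case: eqP => [->//|/eqP ne]; case: eqP => [->//|/eqP nk].
  by have := E 0 k; rewrite !mxE (negbTE ne) (negbTE nk).
have gh s ab : g (h s ab) = g s.
  apply/matrixP => i k; rewrite !mxE; case: eqP => //= _; case: eqP => //=.
have hinj s : injective (h s).
  move=> [a b] [a' b'] E.
  have E1 := congr1 (fun M : Sigma m => M 0 (evi j)) E.
  have E2 := congr1 (fun M : Sigma m => M 0 (odi j)) E.
  by rewrite /= !mxE !eqxx hevod /= in E1 E2; rewrite E1 E2.
have restE s s' : g s' == g s -> restS j d d' s' = restS j d d' s.
  move/eqP/matrixP => E; apply: eq_bigr => i nij.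
  have X k : (k == evi j) || (k == odi j) = false -> s' 0 k = s 0 k.
    by move=> hk; have := E 0 k; rewrite !mxE hk.
  have nev : evi i != evi j.
    apply/eqP => /(congr1 val) /= H; move/eqP: nij; apply; apply: ord_inj; clear -H; simpl in H; lia.
  have nod : odi i != odi j.
    apply/eqP => /(congr1 val) /= H; move/eqP: nij; apply; apply: ord_inj; clear -H; simpl in H; lia.
  have Xe : s' 0 (evi i) = s 0 (evi i).
    by apply: X; apply/negbTE; rewrite negb_or nev evod_neq.
  have Xo : s' 0 (odi i) = s 0 (odi i).
    by apply: X; apply/negbTE; rewrite negb_or nod eq_sym evod_neq.
  rewrite /Tm Xe Xo; reflexivity.
have W1 : (0 < W)%N by apply: ltn_trans h32.
suff H : (#|[pred s : Sigma m | (NH s d - NH s d')%R == w]| * (W * W) <= W * #|{: Sigma m}|)%N.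
  by rewrite -(leq_pmul2l W1) mulnCA; exact: H.
apply: (card_dbl (g := g)).
- move=> s; transitivity #|h s @: setT|.
    apply: eq_card => s'; rewrite !inE; apply/eqP/imsetP => [E|[ab _ ->]].
    + by exists (s' 0 (evi j), s' 0 (odi j)) => //; apply: key; apply/eqP.
    + exact: gh.
  by rewrite card_imset // cardsT card_prod card_Zn // h32.
- move=> s.
  apply: leq_trans (card_fib_le (Q := [pred ab : Z32 * Z32 | pt (2 ^ 64) (d 0 (evi j)) (d 0 (odi j))
       (d' 0 (evi j)) (d' 0 (odi j)) ab.1 ab.2 == w - restS j d d' s])
     (g := fun s' : Sigma m => (s' 0 (evi j), s' 0 (odi j))) (c := 1%N) _ _) _.
  + move=> s' /andP[E /eqP G]; have {}E : NH s' d - NH s' d' = w by apply/eqP.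
    rewrite inE /=; apply/eqP.
    rewrite -E (NH_split j) (restE s s'); first by rewrite addrK.
    by apply/eqP.
  + move=> ab; apply/card_le1_eqP => s1 s2; rewrite !inE => /andP[/andP[_ G1] /eqP E1] /andP[/andP[_ G2] /eqP E2].
    by rewrite (key _ _ G1) (key _ _ G2) E1 E2.
  + rewrite muln1; apply: (pair_count h32 h64); exact: hj.
Qed.

End NHs.
Section Ker. Local Open Scope ring_scope.

Lemma h64gt : (1 < 2 ^ 64)%N.
Proof. by rewrite -[X in (X < _)%N]/(2 ^ 0)%N ltn_exp2l. Qed.

Lemma valZ n (h : (1 < n)%N) c : val (c%:R : 'Z_n) = (c %% n)%N.
Proof. exact: val_Zp_nat. Qed.

Lemma coord_dvd (z : int) o v (a : Z64) : (v <= 64)%N -> coprime 2 o -> `|z|%N = (o * 2 ^ v)%N ->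
  z%:~R * a = 0 -> (2 ^ (64 - v) %| val a)%N.
Proof.
move=> hv co hz H.
have Hz : ((`|z|%N)%:R : Z64) * a = 0.
  move: H; case: z hz => n hz /=.
  - by rewrite pmulrn.
  - by rewrite NegzE mulrNz pmulrn mulNr => /eqP; rewrite oppr_eq0 => /eqP.
have E : ((`|z| * val a) %% 2 ^ 64 = 0)%N.
  by rewrite -valZ ?h64gt // natrM natr_Zp Hz.
have E2 : (2 ^ (64 - v) * 2 ^ v %| o * 2 ^ v * val a)%N.
  by rewrite -expnD subnK // -hz /dvdn E.
move: E2; rewrite mulnAC dvdn_pmul2r ?expn_gt0 // Gauss_dvdr //.
exact: coprimeXl.
Qed.

Lemma coord_count (z : int) o v : (v <= 64)%N -> coprime 2 o -> `|z|%N = (o * 2 ^ v)%N ->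
  (#|[pred a : Z64 | (z%:~R * a == 0)%R]| <= 2 ^ v)%N.
Proof.
move=> hv co hz.
have q0 : (0 < 2 ^ (64 - v))%N by rewrite expn_gt0.
have v0 : (0 < 2 ^ v)%N by rewrite expn_gt0.
have lt (a : Z64) : (val a %/ 2 ^ (64 - v) < 2 ^ v)%N.
  by rewrite ltn_divLR // -expnD subnKC //; exact: (Zp_vallt h64gt a).
apply: leq_trans (card_fib_le (Q := predT)
   (g := fun a : Z64 => Ordinal (ltn_pmod (val a %/ 2 ^ (64 - v)) v0)) (c := 1%N) _ _) _ => //.
- move=> b; apply/card_le1_eqP => a1 a2; rewrite !inE => /andP[H1 /eqP G1] /andP[H2 /eqP G2].
  have {}H1 : z%:~R * a1 = 0 by apply/eqP.
  have {}H2 : z%:~R * a2 = 0 by apply/eqP.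
  have D1 := coord_dvd hv co hz H1; have D2 := coord_dvd hv co hz H2.
  have := congr1 val (etrans G1 (esym G2)); rewrite /= !modn_small ?lt // => E.
  by apply: val_inj; rewrite -(divnK D1) -(divnK D2) E.
- by rewrite muln1 -[X in (_ <= X)%N](card_ord (2 ^ v)); apply: subset_leq_card; apply/subsetP.
Qed.

Lemma foldr_prod (T : finType) (G : T -> nat) : foldr muln 1%N [seq G x | x : T] = (\prod_x G x)%N.
Proof. by rewrite foldrE big_map big_enum. Qed.

Lemma ker_count k (B : 'M[int]_k) (c : 'cV[Z64]_k) o v : (v <= 64)%N -> coprime 2 o ->
  `|\det B|%N = (o * 2 ^ v)%N ->
  (#|[pred w : {ffun 'I_k -> Z64} | (map_mx (fun z : int => z%:~R) B *m \col_j w j == c)%R]|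
     <= 2 ^ (v * k))%N.
Proof.
move=> hv co hz.
set A := map_mx _ B.
have detA : \det A = (\det B)%:~R by rewrite /A det_map_mx.
case: (pickP [pred w : {ffun 'I_k -> Z64} | A *m \col_j w j == c]) => [w0 Hw0 | none]; last first.
  by rewrite (eq_card0 none).
apply: leq_trans (card_fib_le (Q := family (fun _ : 'I_k => [pred a : Z64 | (\det B)%:~R * a == 0]))
   (g := fun w : {ffun 'I_k -> Z64} => [ffun j => w j - w0 j]) (c := 1%N) _ _) _.
- move=> w Hw; apply/familyP => j; rewrite ffunE inE.
  have Hw' : A *m \col_j w j = c by apply/eqP.
  have Hw0' : A *m \col_j w0 j = c by apply/eqP.
  have Z : A *m \col_j (w j - w0 j) = 0.
    have -> : \col_j (w j - w0 j) = \col_j w j - \col_j w0 j.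
      by apply/matrixP => i l; rewrite !mxE.
    by rewrite mulmxBr Hw' Hw0' subrr.
  have := congr1 (mulmx (\adj A)) Z.
  rewrite mulmxA mul_adj_mx mul_scalar_mx mulmx0 detA => /matrixP /(_ j 0).
  by rewrite !mxE => ->.
- move=> w'; apply/card_le1_eqP => w1 w2; rewrite !inE => /andP[_ /eqP E1] /andP[_ /eqP E2].
  apply/ffunP => j; have := congr1 (fun f : {ffun 'I_k -> Z64} => f j) (etrans E1 (esym E2)).
  by rewrite /= !ffunE => /addIr.
- rewrite muln1 card_family foldr_prod.
  apply: leq_trans (leq_prod (E2 := fun _ => 2 ^ v)%N _) _.
    by move=> j _; exact: coord_count hv co hz.
  by rewrite prod_nat_const card_ord -expnM.
Qed.
End Ker.
Section Main. Local Open Scope ring_scope.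

Lemma main_count (D : Type) (m k e : nat) (hm : (1 <= m)%N)
  (J : D -> 'I_e -> Sigma m) (T : 'M[int]_(k, e)) (f : 'I_k -> 'I_e) (finj : injective f)
  (x y : D) (fD : forall j, J x (f j) != J y (f j)) o v (hv : (v <= 64)%N) (co : coprime 2 o)
  (hdo : `|\det (colsub f T)|%N = (o * 2 ^ v)%N) (delta : 'cV[Z64]_k) :
  (#|[pred s : {ffun 'I_e -> Sigma m} | (EHC J T s x - EHC J T s y == delta)%R]| * 2 ^ (32 * k)
    <= 2 ^ (v * k) * #|{: Sigma m}| ^ e)%N.
Proof.
set Sc := #|{: Sigma m}|.
pose NHd i (s : Sigma m) := NH s (J x i) - NH s (J y i).
pose T' := map_mx (fun z : int => z%:~R) T : 'M[Z64]_(k, e).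
pose Fset := f @: [set: 'I_k].
pose gF (s : {ffun 'I_e -> Sigma m}) : {ffun 'I_e -> Sigma m} := [ffun i => if i \in Fset then 0 else s i].
pose vv (s : {ffun 'I_e -> Sigma m}) := \col_i (if i \in Fset then 0 else NHd i (s i)) : 'cV[Z64]_e.
pose hF (s : {ffun 'I_e -> Sigma m}) : {ffun 'I_k -> Z64} := [ffun j => NHd (f j) (s (f j))].
have EHC_diff s : EHC J T s x - EHC J T s y = T' *m \col_i NHd i (s i).
  by rewrite /EHC -mulmxBr; congr (_ *m _); apply/matrixP => i l; rewrite !mxE.
have Hsplit (t : {ffun 'I_e -> Sigma m}) : T' *m \col_i NHd i (t i) = T' *m vv t + colsub f T' *m \col_j hF t j.
  apply/matrixP => r l; rewrite !mxE.
  rewrite (bigID (fun i => i \in Fset)) [X in _ = X + _](bigID (fun i => i \in Fset)) /=.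
  rewrite [X in _ = X + _ + _]big1 ?add0r; last by move=> i hi; rewrite !mxE hi mulr0.
  rewrite addrC; congr (_ + _).
    by apply: eq_bigr => i /negbTE hi; rewrite !mxE hi.
  rewrite big_imset /=; last by move=> ? ? _ _; apply: finj.
  apply: eq_big => [j|j _]; [by rewrite inE | by rewrite !mxE ffunE].
have vv_eq (t t0 : {ffun 'I_e -> Sigma m}) : gF t = gF t0 -> vv t = vv t0.
  move=> G; apply/matrixP => i l; rewrite !mxE; case: ifP => // hi.
  by have := congr1 (fun g : {ffun 'I_e -> Sigma m} => g i) G; rewrite /= !ffunE hi => ->.
have colsub_map : colsub f T' = map_mx (fun z : int => z%:~R) (colsub f T).
  by apply/matrixP => i j; rewrite !mxE.
have W1 : (0 < 2 ^ 32)%N by rewrite expn_gt0.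
have cFset : #|Fset| = k by rewrite card_imset // cardsT card_ord.
have prodF (c : nat) : (\prod_(i < e) (if i \in Fset then c else 1%N) = c ^ k)%N.
  by rewrite -big_mkcond /= prod_nat_const cFset.
set M := (Sc %/ 2 ^ 32)%N.
have main : (#|[pred s : {ffun 'I_e -> Sigma m} | (EHC J T s x - EHC J T s y == delta)%R]| * Sc ^ k
    <= (2 ^ (v * k) * M ^ k) * #|{: {ffun 'I_e -> Sigma m}}|)%N.
  apply: (card_dbl (g := gF)).
  - move=> s; transitivity #|(family (fun i => if i \in Fset then predT else pred1 (s i)) : pred {ffun 'I_e -> Sigma m})|.
      apply: eq_card => s'; rewrite !inE; apply/eqP/familyP => [E i | H].
        have := congr1 (fun g : {ffun 'I_e -> Sigma m} => g i) E; rewrite /= !ffunE.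
        by case: ifP => _ //= ->; rewrite inE eqxx.
      by apply/ffunP => i; rewrite !ffunE; have := H i; case: ifP => // _; rewrite inE => /eqP ->.
    rewrite card_family foldr_prod -(prodF Sc); apply: eq_bigr => i _.
    case: ifP => _; last exact: card1.
    by apply: eq_card.
  - move=> s0.
    apply: leq_trans (card_fib_le (Q := [pred w : {ffun 'I_k -> Z64} |
        (map_mx (fun z : int => z%:~R) (colsub f T) *m \col_j w j == delta - T' *m vv s0)%R])
        (g := hF) (c := (M ^ k)%N) _ _) _.
    + move=> s /andP[E G].
      have {}E : EHC J T s x - EHC J T s y = delta by apply/eqP.
      have {}G : gF s = gF s0 by apply/eqP.
      rewrite inE; apply/eqP.
      by rewrite -colsub_map -E EHC_diff Hsplit (vv_eq _ _ G) addrC addKr.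
    + move=> w.
      pose G i := if i \in Fset then [pred sg : Sigma m | [forall j, (f j == i) ==> (NHd i sg == w j)]]
                  else pred1 (s0 i).
      apply: leq_trans (subset_leq_card (B := (family G : pred {ffun 'I_e -> Sigma m})) _) _.
        apply/subsetP => s; rewrite !inE => /andP[/andP[_ Gs] Hs].
        have {}Gs : gF s = gF s0 by apply/eqP.
        have {}Hs : hF s = w by apply/eqP.
        apply/familyP => i; rewrite /G; case: ifP => hi.
          rewrite inE; apply/forallP => j; apply/implyP => /eqP fji.
          by rewrite -Hs ffunE fji.
        by rewrite inE; have := congr1 (fun g : {ffun 'I_e -> Sigma m} => g i) Gs; rewrite /= !ffunE hi => ->.
      rewrite card_family foldr_prod -(prodF M); apply: leq_prod => i _.
      rewrite /G; case: ifP => hi; last by rewrite card1.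
      have /imsetP [j0 _ ej] := hi; subst i.
      apply: leq_trans (subset_leq_card (B := [pred sg : Sigma m | (NHd (f j0) sg == w j0)%R]) _) _.
        by apply/subsetP => sg; rewrite !inE => /forallP /(_ j0); rewrite eqxx.
      rewrite leq_divRL //; exact: NH_count (fD j0).
    + rewrite leq_mul2r; apply/orP; right; exact: (@ker_count _ _ _ o v hv co hdo).
have cff : #|{: {ffun 'I_e -> Sigma m}}| = (Sc ^ e)%N by rewrite card_ffun card_ord.
have hSc : (M * 2 ^ 32)%N = Sc.
  apply: divnK; rewrite /Sc card_mx card_Zn; last exact: h32.
  by rewrite -{1}(expn1 (2 ^ 32)) dvdn_exp2l // mul1n; lia.
have Sc0 : (0 < Sc ^ k)%N by rewrite expn_gt0 /Sc; apply/orP; left; apply/card_gt0P; exists 0.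
rewrite -(leq_pmul2r Sc0).
have := leq_mul main (leqnn (2 ^ (32 * k))); rewrite cff.
have -> : (2 ^ (v * k) * M ^ k * Sc ^ e * 2 ^ (32 * k) = 2 ^ (v * k) * Sc ^ e * Sc ^ k)%N.
  have -> : (Sc ^ k = M ^ k * (2 ^ 32) ^ k)%N by rewrite -expnMn hSc.
  rewrite [(2 ^ (32 * k))%N]expnM; move: (2 ^ (v * k))%N (M ^ k)%N (Sc ^ e)%N ((2 ^ 32) ^ k)%N => a b c d.
  by rewrite -!mulnA; congr (_ * _); rewrite mulnCA.
by rewrite mulnAC.
Qed.
End Main.

Unset Implicit Arguments.
Local Open Scope ring_scope.

Theorem mainTheorem2 (D : Type) (m k e : nat)
  (hm : (1 <= m)%N) (hk : (1 <= k)%N) (hke : (k <= e)%N)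
  (J : D -> 'I_e -> Sigma m)
  (hJ : forall x y : D, x <> y -> (k <= hamming (J x) (J y))%N)
  (T : 'M[int]_(k, e))
  (hT : forall f : 'I_k -> 'I_e, injective f ->
          ~~ (((2 ^ 64)%N%:Z) %| \det (colsub f T))%Z)
  (p : nat)
  (hp1 : exists2 f : 'I_k -> 'I_e, injective f &
          (((2 ^ p)%N%:Z) %| \det (colsub f T))%Z)
  (hp2 : forall (f : 'I_k -> 'I_e) (q : nat), injective f ->
          (((2 ^ q)%N%:Z) %| \det (colsub f T))%Z -> (q <= p)%N) :
  forall (x y : D), x <> y -> forall delta : 'cV['Z_(2 ^ 64)]_k,
    diff_prob J T x y delta <= (2%:Q) ^ ((k%:Z) * (p%:Z - 32)).
Proof.
move=> x y hxy delta.
set Dset := [set i : 'I_e | J x i != J y i].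
have hk' : (k <= #|Dset|)%N := hJ x y hxy.
pose f (j : 'I_k) : 'I_e := enum_val (widen_ord hk' j).
have finj : injective f.
  by move=> j1 j2 /enum_val_inj /(congr1 val) /= h; apply: val_inj.
have fD j : J x (f j) != J y (f j).
  by have := enum_valP (widen_ord hk' j); rewrite inE.
set dB := \det (colsub f T).
have dB0 : dB != 0.
  by apply/negP => /eqP d0; move: (hT f finj); rewrite -/dB d0 dvdz0.
have dBp : (0 < `|dB|)%N by rewrite absz_gt0.
have [o co hdo] := pfactor_coprime (isT : prime 2) dBp.
move: hdo; set v := logn 2 `|dB| => hdo.
have hv64 : (v < 64)%N.
  rewrite ltnNge; apply/negP => h; move: (hT f finj).
  by rewrite -/dB dvdzE absz_nat pfactor_dvdn // ?absz_gt0 // h.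
have hvp : (v <= p)%N.
  by apply: (hp2 f v finj); rewrite dvdzE absz_nat pfactor_dvdn // absz_gt0.
have nat_ineq := main_count hm finj fD (ltnW hv64) co hdo delta.
rewrite /diff_prob.
have cP : #|[set s : {ffun 'I_e -> Sigma m} | EHC J T s x - EHC J T s y == delta]| =
          #|[pred s : {ffun 'I_e -> Sigma m} | EHC J T s x - EHC J T s y == delta]|.
  by apply: eq_card => s; rewrite inE.
rewrite cP card_ffun card_ord.
move: nat_ineq.
set P := #|[pred s : {ffun 'I_e -> Sigma m} | _]|.
set Sc := #|{: Sigma m}| => nat_ineq.
have E2 : (2%:Q) ^ (k%:Z * (p%:Z - 32)) = (2 ^ (p * k))%N%:R / (2 ^ (32 * k))%N%:R.
  have -> : (k%:Z * (p%:Z - 32) = (p * k)%N%:Z + - (32 * k)%N%:Z)%R.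
    by rewrite !PoszM; ring.
  by rewrite expfzDr // -invr_expz -!exprnP !natrX.
have Se0 : (0 < Sc ^ e)%N by rewrite expn_gt0 /Sc; apply/orP; left; apply/card_gt0P; exists 0.
rewrite E2 ler_pdivrMr ?ltr0n // mulrAC ler_pdivlMr ?ltr0n ?expn_gt0 // -!natrM ler_nat.
apply: leq_trans nat_ineq _; rewrite leq_mul2r; apply/orP; right.
by apply: leq_pexp2l => //; rewrite leq_mul2r hvp orbT.
Qed.
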